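(* Let $R=k[x_1,x_2,x_3]$ and let $A=R/I$ be an Artinian algebra with $h$-vector $(1,3,h_2,\ldots,h_s)$ and socle degree $s$. If $h_{d-1}-h_d=2(h_d-h_{d+1})>0$ for some $d$ with $r_1(A)<d<s$, then $A$ is not level.
   Context: $k$ is an infinite field of characteristic $0$; $h_i=\dim_kA_i$, $A_s\neq0$. $A$ is level if its socle $\{a\in A:a\mathfrak m=0\}$ ($\mathfrak m$ the maximal homogeneous ideal) is concentrated in a single degree. $r_1(A)=\min\{\ell:(R/(I+(L)))_{\ell+1}=0\}$ for a general linear form $L$ (equivalently $\min\{\ell: x_2^{\ell+1}\in\mathrm{Gin}(I)\}$, generic initial ideal for degree reverse lexicographic order). *)

(* Defs.v *)
From HB Require Import structures.
From mathcomp Require Import all_boot all_order all_algebra.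
From mathcomp Require Export mpoly.
Set Implicit Arguments. Unset Strict Implicit. Unset Printing Implicit Defensive.
Import Order.TTheory GRing.Theory Num.Theory.
Local Open Scope ring_scope.

(* R = k[x_1,x_2,x_3] is {mpoly k[3]}; variables x_1,x_2,x_3 are 'X_0,'X_1,'X_2. *)

Section Defs.
Variable k : fieldType.
Notation R := {mpoly k[3]}.

Definition hcomp (d : nat) (p : R) : R :=
  \sum_(m <- msupp p | mdeg m == d) p@_m *: 'X_[m].

Definition homog_ideal (I : pred R) : Prop :=
  [/\ 0 \in I,
      (forall p q, p \in I -> q \in I -> p + q \in I),
      (forall p q, q \in I -> p * q \in I)
    & (forall p d, p \in I -> hcomp d p \in I)].

(* The family f of degree-i forms is linearly independent in A_i = (R/I)_i *)
Definition indep_mod (I : pred R) (i n : nat) (f : 'I_n -> R) : Prop :=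
  (forall j, f j \is i.-homog) /\
  (forall c : 'I_n -> k, (\sum_j c j *: f j) \in I -> forall j, c j = 0).

(* dim_k (R/I)_i = n *)
Definition dimA (I : pred R) (i n : nat) : Prop :=
  (exists f : 'I_n -> R, indep_mod I i f) /\
  (forall f : 'I_n.+1 -> R, ~ indep_mod I i f).

(* (R/J)_j = 0 where J = I + (L) *)
Definition quot_vanishes (I : pred R) (L : R) (j : nat) : Prop :=
  forall p : R, p \is j.-homog -> exists q g : R, q \in I /\ p = q + L * g.

Definition linform (a : 'I_3 -> k) : R := \sum_(j < 3) a j *: 'X_j.

(* a property of linear forms holds for a general linear form: it holds on a
   nonempty Zariski-open subset of the coefficient space k^3, i.e. outside
   the zero locus of some nonzero polynomial F *)
Definition general (P : R -> Prop) : Prop :=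
  exists F : R, F != 0 /\ forall a : 'I_3 -> k, F.@[a] != 0 -> P (linform a).

(* r = r_1(A): least l with (R/(I+(L)))_(l+1) = 0 for a general linear form L *)
Definition is_r1 (I : pred R) (r : nat) : Prop :=
  general (fun L => quot_vanishes I L r.+1) /\
  (forall l, (l < r)%N -> ~ general (fun L => quot_vanishes I L l.+1)).

(* socle of A = R/I: classes a with a * m = 0, i.e. x_j * p in I for all j *)
Definition in_socle (I : pred R) (p : R) : Prop :=
  forall j : 'I_3, 'X_j * p \in I.

(* A is level: its socle is concentrated in a single degree e *)
Definition is_level (I : pred R) : Prop :=
  exists e : nat, forall p : R, in_socle I p ->
    exists q : R, q \is e.-homog /\ p - q \in I.
End Defs.

(* Main.v *)
Require Import Defs.
From HB Require Import structures.
From mathcomp Require Import all_boot all_order all_algebra.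
From mathcomp Require Import mpoly.
From Stdlib Require Import Classical Lia.
From mathcomp Require Import zify.
Set Implicit Arguments. Unset Strict Implicit. Unset Printing Implicit Defensive.
Import GRing.Theory.
Local Open Scope ring_scope.

Section LA.
Variables (k : fieldType) (V : lmodType k).

Definition subsp (P : V -> Prop) :=
  [/\ P 0, (forall p q, P p -> P q -> P (p + q)) & (forall c p, P p -> P (c *: p))].

Definition indepZ (Z : V -> Prop) n (f : 'I_n -> V) :=
  forall c : 'I_n -> k, Z (\sum_j c j *: f j) -> forall j, c j = 0.

Lemma subsp_sum P n (f : 'I_n -> V) c : subsp P -> (forall i, P (f i)) ->
  P (\sum_i c i *: f i).
Proof.
case=> P0 PD PZ Pf; apply: (big_ind P) => // i _; exact: PZ.
Qed.

Lemma subsp_sumF P n (F : 'I_n -> V) : subsp P -> (forall i, P (F i)) ->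
  P (\sum_i F i).
Proof. case=> P0 PD PZ Pf; exact: (big_ind P). Qed.

Lemma subsp_Z P c p : subsp P -> P p -> P (c *: p).
Proof. by case=> _ _ PZ; apply: PZ. Qed.

Lemma subsp_N P p : subsp P -> P p -> P (- p).
Proof. by case=> _ _ PZ /(PZ (-1)); rewrite scaleN1r. Qed.

Lemma subsp_B P p q : subsp P -> P p -> P q -> P (p - q).
Proof. by move=> sP Pp Pq; case: (sP) => _ PD _; apply: PD => //; apply: subsp_N. Qed.

Lemma subsp_Zinv P c p : subsp P -> c != 0 -> P (c *: p) -> P p.
Proof.
by case=> _ _ PZ nz /(PZ c^-1); rewrite scalerA mulVf // scale1r.
Qed.

Lemma notindepE (Z : V -> Prop) n (f : 'I_n -> V) : ~ indepZ Z f ->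
  exists c : 'I_n -> k, Z (\sum_j c j *: f j) /\ exists j, c j != 0.
Proof.
move=> H; apply: NNPP => H2; apply: H => c Zc j; apply: NNPP => cj.
by apply: H2; exists c; split => //; exists j; apply/eqP.
Qed.

Definition fcons n (u : V) (f : 'I_n -> V) : 'I_n.+1 -> V :=
  fun i => if unlift ord0 i is Some j then f j else u.

Lemma sum_fcons n u (f : 'I_n -> V) (c : 'I_n.+1 -> k) :
  \sum_i c i *: fcons u f i = c ord0 *: u + \sum_j c (lift ord0 j) *: f j.
Proof.
rewrite big_ord_recl /fcons unlift_none; congr (_ + _).
by apply: eq_bigr => j _; rewrite liftK.
Qed.

Lemma kernel_lemma (S T : V -> Prop) M : subsp S -> subsp T ->
  (forall m (g : 'I_m -> V), (M < m)%N -> (forall i, S (g i)) ->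
     exists c : 'I_m -> k, T (\sum_i c i *: g i) /\ exists i, c i != 0) ->
  forall N (Z : V -> Prop) (f : 'I_N -> V), subsp Z -> (forall i, S (f i)) -> indepZ Z f ->
  exists n (w : 'I_n -> V), (N <= n + M)%N /\ (forall i, S (w i) /\ T (w i)) /\ indepZ Z w.
Proof.
move=> sS sT H; elim=> [|N IH] Z f sZ Sf If.
  by exists 0%N, (fun _ => 0); split => //; split => [[]|c _ []].
case: (leqP N.+1 M) => hNM.
  by exists 0%N, (fun _ => 0); split => //; split => [[]|c _ []].
have [c [Tv [i0 ci0]]] := H _ f hNM Sf.
set v0 := \sum_i c i *: f i in Tv.
have Sv : S v0 by apply: subsp_sum.
have nZv : ~ Z v0.
  move=> Zv; move: ci0; rewrite (If c Zv) eqxx //.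
pose Z' := fun p => exists t, Z (p - t *: v0).
have sZ' : subsp Z'.
  case: sZ => Z0 ZD ZZ; split.
  - by exists 0; rewrite scale0r subr0.
  - move=> p q [t1 h1] [t2 h2]; exists (t1 + t2).
    have -> : p + q - (t1 + t2) *: v0 = (p - t1 *: v0) + (q - t2 *: v0).
      by rewrite scalerDl opprD addrACA.
    exact: ZD.
  - move=> a p [t h]; exists (a * t).
    by rewrite -scalerA -scalerBr; apply: ZZ.
pose f' := fun j => f (lift i0 j).
have If' : indepZ Z' f'.
  move=> e [t Ht].
  pose c' := fun i => (if unlift i0 i is Some j then e j else 0) - t * c i.
  have E : \sum_i c' i *: f i = \sum_j e j *: f' j - t *: v0.
    rewrite /c'; under eq_bigr do rewrite scalerBl.
    rewrite sumrB /v0 scaler_sumr; congr (_ - _); last first.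
      by apply: eq_bigr => i _; rewrite scalerA.
    rewrite (bigD1_ord i0) //= unlift_none scale0r add0r.
    by apply: eq_bigr => j _; rewrite liftK.
  have := If c' ; rewrite E => /(_ Ht) Hc'.
  have t0 : t = 0.
    have := Hc' i0; rewrite /c' unlift_none sub0r => /eqP.
    by rewrite oppr_eq0 mulf_eq0 (negbTE ci0) orbF => /eqP.
  move=> j; have := Hc' (lift i0 j); by rewrite /c' liftK t0 mul0r subr0.
have [n [w' [hn [STw' Iw']]]] := IH Z' f' sZ' (fun j => Sf _) If'.
exists n.+1, (fcons v0 w'); split; first by rewrite addSn ltnS.
split.
  move=> i; rewrite /fcons; case: (unlift ord0 i) => [j|] //; exact: STw'.
move=> e; rewrite sum_fcons => Ze.
have e' : forall j, e (lift ord0 j) = 0.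
  apply: Iw'; exists (- e ord0).
  by rewrite scaleNr opprK addrC.
have e0 : e ord0 = 0.
  case: (eqVneq (e ord0) 0) => // ne0; exfalso; apply: nZv.
  apply: (subsp_Zinv sZ ne0); move: Ze; rewrite big1 ?addr0 // => j _.
  by rewrite e' scale0r.
by move=> i; case: (unliftP ord0 i) => [j ->|->].
Qed.
End LA.

Section P.
Variables (k : fieldType) (I : pred {mpoly k[3]}) (HI : homog_ideal I).
Notation R := {mpoly k[3]}.
Notation inI := (fun p : R => p \in I).

Lemma sI : subsp inI.
Proof.
case: HI => I0 ID IM _; split => // c p Ip; rewrite /inI -mul_mpolyC; exact: IM.
Qed.

Lemma IZ c (p : R) : p \in I -> c *: p \in I.
Proof. by move=> H; have := subsp_Z c sI H. Qed.

Lemma IM p q : q \in I -> p * q \in I.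
Proof. by move=> Hq; case: HI => _ _ H _; apply: H. Qed.
Lemma IMr p q : q \in I -> q * p \in I.
Proof. by rewrite mulrC; apply: IM. Qed.

Lemma hcompE d (p : R) : hcomp d p = pihomog mdeg d p.
Proof. by rewrite /hcomp pihomogE. Qed.

Lemma sH d : subsp (fun p : R => p \is d.-homog).
Proof. split => [|p q|c p]; [exact: rpred0|exact: rpredD|exact: rpredZ]. Qed.

Lemma dim_bound j n m (f : 'I_m -> R) : dimA I j n -> indep_mod I j f -> (m <= n)%N.
Proof.
move=> [_ Hn] [Hh If]; rewrite leqNgt; apply/negP => hm.
apply: (Hn (fun i => f (widen_ord hm i))); split; first by move=> i; apply: Hh.
move=> c Hc j0.
pose c' : 'I_m -> k := fun i => if (i < n.+1)%N then c (inord i) else 0.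
have E : \sum_i c' i *: f i = \sum_i c i *: f (widen_ord hm i).
  rewrite (bigID (fun i : 'I_m => (i < n.+1)%N)) /= [X in _ + X]big1 ?addr0; last first.
    by move=> i /negbTE; rewrite /c' => ->; rewrite scale0r.
  rewrite (big_ord_narrow hm); apply: eq_bigr => i _.
  by rewrite /c' /= ltn_ord inord_val.
have := If c'; rewrite E => /(_ Hc (widen_ord hm j0)).
by rewrite /c' /= ltn_ord inord_val.
Qed.

Lemma notindep j n m (g : 'I_m -> R) : dimA I j n -> (n < m)%N ->
  (forall i, g i \is j.-homog) ->
  exists c : 'I_m -> k, (\sum_i c i *: g i) \in I /\ exists i, c i != 0.
Proof.
move=> Hd hm Hg; apply: (notindepE (Z := inI)) => Ig.
have := dim_bound Hd (conj Hg Ig); by rewrite leqNgt hm.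
Qed.

Lemma dim0 j p : dimA I j 0 -> p \is j.-homog -> p \in I.
Proof.
move=> Hd Hp; have [c [Hc [i ci]]] := notindep (g := fun _ : 'I_1 => p) Hd (ltn0Sn 0) (fun _ => Hp).
move: Hc; rewrite big_ord1 (ord1 i) in ci *.
exact: (subsp_Zinv sI ci).
Qed.


Lemma pihomog_mulL e (L g : R) : L \is 1.-homog ->
  pihomog mdeg e.+1 (L * g) = L * pihomog mdeg e g.
Proof.
move=> HL.
have hK : (e < mmeasure mdeg g + e.+1)%N by rewrite addnS ltnS leq_addl.
rewrite {1}(pihomog_partitionE (mf:=mdeg) (k:=(mmeasure mdeg g + e.+1)%N) (p := g)) ?leq_addr //.
rewrite mulr_sumr raddf_sum /=.
rewrite (bigD1 (Ordinal hK)) //= big1 ?addr0.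
  rewrite pihomog_dE //; exact: (dhomogM HL (pihomogP _ _ _)).
move=> i ne; apply: (pihomog_ne0 (d := (1 + i)%N)).
  rewrite add1n eqSS; apply: contraNneq ne => h; apply/eqP/val_inj => /=.
  exact: h.
exact: (dhomogM HL (pihomogP _ _ _)).
Qed.

Definition vanish (L : R) j := forall p : R, p \is j.+1.-homog ->
  exists q g, q \in I /\ g \is j.-homog /\ p = q + L * g.

Lemma vanish_base L j : L \is 1.-homog -> quot_vanishes I L j.+1 -> vanish L j.
Proof.
move=> HL Hq p Hp; have [q [g [Iq E]]] := Hq p Hp.
exists (pihomog mdeg j.+1 q), (pihomog mdeg j g); split.
  rewrite -hcompE; case: HI => _ _ _ H; exact: H.
split; first exact: pihomogP.
by rewrite -pihomog_mulL // -raddfD /= -E pihomog_dE.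
Qed.

Lemma vanish_step L j : vanish L j -> vanish L j.+1.
Proof.
move=> Hv p Hp.
pose Q := fun p : R => exists q g, q \in I /\ g \is j.+1.-homog /\ p = q + L * g.
have sQ : subsp Q.
  case: sI => I0 ID IZ; split.
  - by exists 0, 0; rewrite mulr0 addr0; split => //; split => //; exact: rpred0.
  - move=> p1 p2 [q1 [g1 [I1 [H1 E1]]]] [q2 [g2 [I2 [H2 E2]]]].
    exists (q1 + q2), (g1 + g2); split; first exact: ID.
    split; first exact: rpredD.
    by rewrite E1 E2 mulrDr addrACA.
  - move=> c p1 [q1 [g1 [I1 [H1 E1]]]]; exists (c *: q1), (c *: g1); split; first exact: IZ.
    split; first exact: rpredZ.
    by rewrite E1 scalerDr scalerAr.
have -> : p = \sum_(m <- msupp p) p@_m *: 'X_[m] := mpolyE p.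
rewrite big_seq; apply: (big_ind Q); first by case: sQ.
  by case: sQ.
move=> m Hm; case: sQ => _ _ QZ; apply: QZ.
have dm : mdeg m = j.+2 by move/dhomogP: Hp => /(_ m Hm).
have [i hi] : exists i, m i != 0%N.
  apply: NNPP => H; move: dm; rewrite mdegE big1 // => i _.
  by apply/eqP; apply: contraT => h; case: H; exists i.
have hU : (U_(i) <= m)%MM by rewrite lep1mP.
have Em : m = ((m - U_(i)) + U_(i))%MM by rewrite submK.
have dm' : mdeg (m - U_(i))%MM = j.+1.
  by move: dm; rewrite {1}Em mdegD mdeg1 addn1 => -[].
have hX : ('X_[m - U_(i)] : R) \is j.+1.-homog by rewrite dhomogX; apply/eqP; exact: dm'.
have [q [g [Iq [Hg E]]]] := Hv _ hX.
exists (q * 'X_i), (g * 'X_i); split; first exact: IMr.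
split.
  have hXi : ('X_i : R) \is 1.-homog by rewrite dhomogX; apply/eqP; exact: mdeg1.
  have := dhomogM Hg hXi; by rewrite addn1.
by rewrite {1}Em mpolyXD E mulrDl mulrA.
Qed.

Lemma vanish_all L j0 j : vanish L j0 -> (j0 <= j)%N -> vanish L j.
Proof.
move=> H; elim: j => [|j IH]; first by rewrite leqn0 => /eqP <-.
rewrite leq_eqVlt => /orP [/eqP <- //|]; rewrite ltnS => /IH; exact: vanish_step.
Qed.

Lemma splitL m n (a : 'I_m) : split (lshift n a) = inl a.
Proof. exact: (unsplitK (inl a)). Qed.
Lemma splitR m n (b : 'I_n) : split (rshift m b) = inr b.
Proof. exact: (unsplitK (inr b)). Qed.

Lemma sum_mulL (L : R) n (c : 'I_n -> k) (f : 'I_n -> R) :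
  L * (\sum_i c i *: f i) = \sum_i c i *: (L * f i).
Proof. by rewrite mulr_sumr; apply: eq_bigr => i _; rewrite scalerAr. Qed.

Lemma dimK (L : R) j hj hj1 : dimA I j hj -> dimA I j.+1 hj1 -> vanish L j ->
  forall n (f : 'I_n -> R), (forall i, f i \is j.-homog /\ L * f i \in I) ->
  indepZ inI f -> (n + hj1 <= hj)%N.
Proof.
move=> Hj [[g [Hg Ig]] _] Hv n f Hf If.
have : forall i, exists gp, gp \is j.-homog /\ g i - L * gp \in I.
  move=> i; have [q [gp [Iq [Hgp E]]]] := Hv _ (Hg i); exists gp; split => //.
  by rewrite E addrK.
case/fin_all_exists => gp Hgp.
pose F : 'I_(n + hj1) -> R := fun i => match split i with inl a => f a | inr b => gp b end.
apply: (dim_bound Hj (f := F)); split.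
  move=> i; rewrite /F; case: (split i) => [a|b]; [exact: (Hf a).1 | exact: (Hgp b).1].
move=> c Hc.
rewrite big_split_ord /= in Hc.
set s1 := \sum_(i < n) c (lshift hj1 i) *: f i.
set s2 := \sum_(i < hj1) c (rshift n i) *: gp i.
have E1 : \sum_(i < n) c (lshift hj1 i) *: F (lshift hj1 i) = s1.
  by apply: eq_bigr => i _; rewrite /F splitL.
have E2 : \sum_(i < hj1) c (rshift n i) *: F (rshift n i) = s2.
  by apply: eq_bigr => i _; rewrite /F splitR.
rewrite E1 E2 in Hc.
have I1 : L * s1 \in I.
  rewrite /s1 sum_mulL; apply: (subsp_sumF sI) => i /=. apply: IZ; exact: (Hf i).2.
have I2 : L * s2 \in I.
  have : L * (s1 + s2) \in I by apply: IM.
  rewrite mulrDr => H; have := subsp_B sI H I1; by rewrite addrC addKr.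
have cr : forall b, c (rshift n b) = 0.
  apply: Ig.
  have -> : \sum_b c (rshift n b) *: g b =
     \sum_b c (rshift n b) *: (g b - L * gp b) + L * s2.
    by rewrite /s2 sum_mulL -big_split /=; apply: eq_bigr => b _; rewrite -scalerDr subrK.
  case: sI => _ ID _; apply: ID => //; apply: (subsp_sumF sI) => b; apply: IZ; exact: (Hgp b).2.
have cl : forall a, c (lshift hj1 a) = 0.
  apply: If; move: Hc; rewrite /s2 big1 ?addr0 // => b _; by rewrite cr scale0r.
move=> i; rewrite -(splitK i); case: (split i) => [a|b] /=; [exact: cl|exact: cr].
Qed.

Lemma sum_delta n (F : 'I_n -> R) i : \sum_j (j == i)%:R *: F j = F i.
Proof.
rewrite (bigD1 i) //= eqxx scale1r big1 ?addr0 // => j /negbTE ->; by rewrite scale0r.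
Qed.

Lemma ID' (p q : R) : p \in I -> q \in I -> p + q \in I.
Proof. by case: HI => _ H _ _; apply: H. Qed.

Lemma sT (l : R) : subsp (fun p => l * p \in I).
Proof.
split => [|p q Hp Hq|c p Hp]; first by rewrite mulr0; case: HI.
  by rewrite mulrDr; apply: ID'.
by rewrite -scalerAr; apply: IZ.
Qed.

Lemma core (L l z : R) d h1 h2 h3 :
  L \is 1.-homog -> l \is 1.-homog -> z \is 1.-homog ->
  dimA I d h1 -> dimA I d.+1 h2 -> dimA I d.+2 h3 ->
  vanish L d -> vanish L d.+1 -> (h3 < h2)%N -> h1 = (h2 + 2 * (h2 - h3))%N ->
  (forall p, p \is d.-homog -> L * p \in I -> l * p \in I -> z * p \in I -> p \in I) ->
  (forall u, u \is d.+1.-homog -> L * u \in I -> l * u \in I) /\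
  exists u, [/\ u \is d.+1.-homog, L * u \in I & u \notin I].
Proof.
move=> HL Hl Hz Hd1 Hd2 Hd3 Hv1 Hv2 h32 Eh nosoc.
have [[f0 [Hf0 If0]] _] := Hd1.
have [n1 [w1 [hn1 [STw1 Iw1]]]] :=
  @kernel_lemma _ _ (fun p : R => p \is d.-homog) (fun p => L * p \in I) h2 (sH d) (sT L)
   (fun m g hm Hg =>
      let: ex_intro c (conj Hc Hnz) :=
         notindep (g := fun i => L * g i) Hd2 hm (fun i => dhomogM HL (Hg i)) in
      ex_intro _ c (conj (eq_ind _ (fun x => x \in I) Hc _ (esym (sum_mulL L c g))) Hnz))
   h1 inI f0 sI Hf0 If0.
pose S2 := fun p : R => p \is d.-homog /\ L * p \in I.
have sS2 : subsp S2.
  have [a1 a2 a3] := sH d; have [b1 b2 b3] := sT L.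
  split => [|p q [? ?] [? ?]|c p [? ?]]; split; auto.
have H2 : forall m (g : 'I_m -> R), (h2 - h3 < m)%N -> (forall i, S2 (g i)) ->
    exists c : 'I_m -> k, l * (\sum_i c i *: g i) \in I /\ exists i, c i != 0.
  move=> m g hm Hg.
  have : ~ indepZ inI (fun i => l * g i).
    move=> Ig; have := dimK Hd2 Hd3 Hv2 (f := fun i => l * g i) _ Ig.
    have HK : forall i, l * g i \is d.+1.-homog /\ L * (l * g i) \in I.
      move=> i; split; first exact: (dhomogM Hl (Hg i).1).
      by rewrite mulrCA; apply: IM; exact: (Hg i).2.
    move/(_ HK); lia.
  move/notindepE => [c [Hc Hnz]]; exists c; split => //; by rewrite sum_mulL.
have [n2 [w2 [hn2 [STw2 Iw2]]]] :=
  @kernel_lemma _ _ S2 (fun p => l * p \in I) (h2 - h3) sS2 (sT l) H2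
   n1 inI w1 sI (fun i => STw1 i) Iw1.
have n2a : (h2 - h3 <= n2)%N by lia.
pose zw := fun i => z * w2 i.
have Izw : indepZ inI zw.
  move=> e He; apply: Iw2; apply: nosoc.
  - apply: (subsp_sumF (sH d)) => i; apply: rpredZ; exact: (STw2 i).1.1.
  - rewrite sum_mulL; apply: (subsp_sumF sI) => i; apply: IZ; exact: (STw2 i).1.2.
  - rewrite sum_mulL; apply: (subsp_sumF sI) => i; apply: IZ; exact: (STw2 i).2.
  - by rewrite sum_mulL.
have Kzw : forall i, zw i \is d.+1.-homog /\ L * zw i \in I.
  move=> i; split; first exact: (dhomogM Hz (STw2 i).1.1).
  by rewrite /zw mulrCA; apply: IM; exact: (STw2 i).1.2.
have lzw : forall i, l * zw i \in I.
  by move=> i; rewrite /zw mulrCA; apply: IM; exact: (STw2 i).2.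
split; last first.
  have n2p : (0 < n2)%N by apply: leq_trans n2a; rewrite subn_gt0.
  exists (zw (Ordinal n2p)); split; [exact: (Kzw _).1|exact: (Kzw _).2|].
  apply/negP => Hu.
  have := Izw (fun j => (j == Ordinal n2p)%:R); rewrite sum_delta => /(_ Hu (Ordinal n2p)).
  by rewrite eqxx => /eqP; rewrite oner_eq0.
move=> u Hu Lu.
have : ~ indepZ inI (fcons u zw).
  move=> Ig; have := dimK Hd2 Hd3 Hv2 (f := fcons u zw) _ Ig.
  have HK : forall i, fcons u zw i \is d.+1.-homog /\ L * fcons u zw i \in I.
    move=> i; rewrite /fcons; case: (unlift ord0 i) => [j|] //; exact: Kzw.
  move/(_ HK); lia.
move/notindepE => [c [Hc [i0 ci0]]].
rewrite sum_fcons in Hc.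
have c0 : c ord0 != 0.
  apply/negP => /eqP c0; move: Hc; rewrite c0 scale0r add0r => /Izw Hc.
  move: ci0; case: (unliftP ord0 i0) => [j ->|->]; by rewrite ?Hc ?c0 eqxx.
have : l * (c ord0 *: u + \sum_j c (lift ord0 j) *: zw j) \in I by apply: IM.
rewrite mulrDr sum_mulL => H.
have : l * (c ord0 *: u) \in I.
  have := subsp_B sI H (subsp_sumF sI (fun j => IZ (c (lift ord0 j)) (lzw j))).
  by rewrite addrK.
rewrite -scalerAr => H'; exact: (subsp_Zinv sI c0 H').
Qed.

End P.

Lemma digits (N x y X Y : nat) : (0 < N)%N -> (x < N)%N -> (y < N)%N ->
  (x + N * X = y + N * Y)%N -> x = y /\ X = Y.
Proof.
move=> N0 xN yN E; split.
  have := congr1 (modn^~ N) E; by rewrite /= ![(_ + N * _)%N]addnC ![(N * _)%N]mulnC !modnMDl !modn_small.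
have := congr1 (divn^~ N) E; by rewrite /= ![(_ + N * _)%N]addnC ![(N * _)%N]mulnC !divnMDl // !divn_small // !addn0.
Qed.

Lemma nonroot (k : fieldType) (Hchar : [pchar k] =i pred0) (F : {mpoly k[3]}) :
  F != 0 -> exists a : 'I_3 -> k, F.@[a] != 0.
Proof.
move=> Fnz.
set N := mmeasure mdeg F.
have bnd : forall m, m \in msupp F -> forall i : 'I_3, (m i < N)%N.
  move=> m Hm i; have := msize_mdeg_lt Hm; rewrite -/N mdegE (bigD1 i) //=; lia.
have N0 : (0 < N)%N.
  have := bnd _ (mlead_supp Fnz) ord0; lia.
pose e (m : 'X_{1..3}) := (\sum_(i < 3) N ^ i * m i)%N.
have einj : {in msupp F &, injective e}.
  move=> m m' Hm Hm'; rewrite /e !big_ord_recl !big_ord0 /bump /= !expn0 !expn1 !mul1n !addn0.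
  have b := bnd _ Hm; have b' := bnd _ Hm'.
  rewrite -!mulnA -!mulnDr => E.
  have [E0 E'] := digits N0 (b _) (b' _) E.
  have [E1 E2] := digits N0 (b _) (b' _) E'.
  apply/mnmP => i; case: (unliftP ord0 i) => [j ->|->] //.
  case: (unliftP ord0 j) => [j' ->|->] //; by rewrite (ord1 j').
pose P : {poly k} := \sum_(m <- msupp F) F@_m *: 'X^(e m).
have PE : forall t, P.[t] = F.@[fun i => t ^+ (N ^ i)].
  move=> t; rewrite horner_sum mevalE; apply: eq_bigr => m _.
  rewrite hornerZ hornerXn /e !big_ord_recl !big_ord0 mulr1 -!exprM -!exprD addn0.
  by rewrite ![(N ^ _ * _)%N]mulnC.
have Pnz : P != 0.
  set m0 := mlead F.
  apply/eqP => /(congr1 (fun p : {poly k} => p`_(e m0))); rewrite coef_sum coef0.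
  rewrite (bigD1_seq m0) ?msupp_uniq ?mlead_supp //= big1_seq.
    rewrite coefZ coefXn eqxx mulr1 addr0 => H0.
    by move: (mlead_supp Fnz); rewrite mcoeff_msupp -/m0 H0 eqxx.
  move=> m /andP [ne Hm]; rewrite coefZ coefXn.
  case: eqP => [Ee|]; last by rewrite mulr0.
  have Em := einj _ _ (mlead_supp Fnz) Hm Ee.
  by move: ne; rewrite -Em /m0 eqxx.
have [t Pt] : exists t, P.[t] != 0.
  apply: NNPP => H.
  pose rs := [seq (i%:R : k) | i <- iota 0 (size P)].
  have Hall : all (root P) rs.
    apply/allP => x /mapP [i _ ->]; rewrite /root; apply/negPn/negP => hx.
    by apply: H; exists i%:R.
  have Hu : uniq rs.
    have natinj : forall i j : nat, i%:R = j%:R :> k -> i = j.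
      move=> i j; wlog le : i j / (i <= j)%N.
        move=> W; case: (leqP i j) => [le|lt] E; first exact: W le E.
        by apply/esym; apply: W (ltnW lt) _; apply/esym.
      move=> E; move: E; rewrite -(subnK le) natrD => /eqP.
      rewrite eq_sym -subr_eq0 addrK; rewrite ((pcharf0P k).1 Hchar (j - i)%N) => /eqP; lia.
    by rewrite map_inj_uniq ?iota_uniq // => i j; apply: natinj.
  have := max_poly_roots Pnz Hall Hu; by rewrite size_map size_iota ltnn.
by exists (fun i => t ^+ (N ^ i)); rewrite -PE.
Qed.


Lemma allX (k : fieldType) (I : pred {mpoly k[3]}) (HI : homog_ideal I)
  (a : 'I_3 -> k) i0 (p : {mpoly k[3]}) : a i0 != 0 ->
  linform a * p \in I -> (forall j : 'I_2, 'X_(lift i0 j) * p \in I) ->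
  forall j, 'X_j * p \in I.
Proof.
move=> ai0 HL Hj j; case: (unliftP i0 j) => [j' ->|->]; first exact: Hj.
have E : linform a * p = a i0 *: ('X_i0 * p) + \sum_(j' < 2) a (lift i0 j') *: ('X_(lift i0 j') * p).
  rewrite /linform mulr_suml (bigD1_ord i0) //= -scalerAl; congr (_ + _).
  by apply: eq_bigr => j' _; rewrite -scalerAl.
apply: (subsp_Zinv (sI HI) ai0).
have := subsp_B (sI HI) HL (subsp_sumF (sI HI) (fun j' => IZ HI (a (lift i0 j')) (Hj j'))).
by rewrite E addrK.
Qed.

Theorem corollary3p20 (k : fieldType) (Hchar : [pchar k] =i pred0)
  (I : pred {mpoly k[3]}) (HI : homog_ideal I)
  (h : nat -> nat) (Hh : forall i, dimA I i (h i))
  (s : nat) (h0 : h 0%N = 1%N) (h1 : h 1%N = 3%N)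
  (hs : (0 < h s)%N) (hvan : forall i, (s < i)%N -> h i = 0%N)
  (r d : nat) (Hr : is_r1 I r) (Hrd : (r < d)%N) (Hds : (d < s)%N)
  (Heq : (h d.-1)%:Z - (h d)%:Z = 2%:Z * ((h d)%:Z - (h d.+1)%:Z))
  (Hpos : (0 < (h d)%:Z - (h d.+1)%:Z)%R) :
  ~ is_level I.
Proof.
move=> [e He].
have socle_deg : forall t u, t != e -> u \is t.-homog -> in_socle I u -> u \in I.
  move=> t u te Hu Hs; have [q [Hq Iuq]] := He u Hs.
  have := (let: And4 _ _ _ H := HI in H) _ t Iuq.
  by rewrite hcompE raddfB /= pihomog_dE // (pihomog_ne0 (d:=e) _ Hq) ?subr0 // eq_sym.
have Hs1 : dimA I s.+1 0 by rewrite -(hvan s.+1 (ltnSn s)).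
have es : e = s.
  have [[f [Hf If]] _] := Hh s.
  pose i0 : 'I_(h s) := Ordinal hs.
  apply/eqP; apply: contraT => ne.
  have Hs : in_socle I (f i0).
    move=> j; apply: (dim0 HI Hs1).
    have HXj : ('X_j : {mpoly k[3]}) \is 1.-homog.
      by rewrite dhomogX; apply/eqP; exact: mdeg1.
    by have := dhomogM HXj (Hf i0); rewrite add1n.
  have se : s != e by rewrite eq_sym.
  have Hin := socle_deg s (f i0) se (Hf i0) Hs.
  have := If (fun j => (j == i0)%:R); rewrite sum_delta => /(_ Hin i0).
  by rewrite eqxx => /eqP; rewrite oner_eq0.
subst e.
case: d Hrd Hds Heq Hpos => [//|d] Hrd Hds Heq Hpos /=.
rewrite /= in Heq.
have h32 : (h d.+2 < h d.+1)%N by lia.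
have h1E : h d = (h d.+1 + 2 * (h d.+1 - h d.+2))%N by lia.
case: Hr => [[F [Fnz HF]] _].
have [a Fa] := nonroot Hchar Fnz.
set L := linform a.
have HL : L \is 1.-homog.
  apply: rpred_sum => j _; apply: rpredZ; rewrite dhomogX; apply/eqP; exact: mdeg1.
have Hv0 := vanish_base HI HL (HF a Fa).
have Hv1 : vanish I L d := vanish_all HI (j := d) Hv0 Hrd.
have Hv2 : vanish I L d.+1 := vanish_all HI (j := d.+1) Hv0 (ltnW Hrd).
case: (pickP (fun i => a i != 0)) => [i0 ai0 | a0]; last first.
  have L0 : L = 0.
    rewrite /L /linform big1 // => j _; move: (a0 j) => /negbFE/eqP ->.
    by rewrite scale0r.
  have [[f [Hf If]] _] := Hh d.+1.
  have hp : (0 < h d.+1)%N by lia.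
  pose i1 : 'I_(h d.+1) := Ordinal hp.
  have Hin : f i1 \in I.
    have [q [g [Iq [_ E]]]] := Hv1 _ (Hf i1).
    by rewrite E L0 mul0r addr0.
  have := If (fun j => (j == i1)%:R); rewrite sum_delta => /(_ Hin i1).
  by rewrite eqxx => /eqP; rewrite oner_eq0.
pose i1 := lift i0 (ord0 : 'I_2).
pose i2 := lift i0 (ord_max : 'I_2).
have Hj2 : forall p, 'X_i1 * p \in I -> 'X_i2 * p \in I ->
    forall j' : 'I_2, 'X_(lift i0 j') * p \in I.
  move=> p H1 H2; case=> [[|[|//]] ?].
    by rewrite (_ : Ordinal _ = ord0) //; apply: val_inj.
  by rewrite (_ : Ordinal _ = ord_max) //; apply: val_inj.
have HX : forall j : 'I_3, ('X_j : {mpoly k[3]}) \is 1.-homog.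
  by move=> j; rewrite dhomogX; apply/eqP; exact: mdeg1.
have nosoc : forall (l z : {mpoly k[3]}), (l = 'X_i1 /\ z = 'X_i2) \/ (l = 'X_i2 /\ z = 'X_i1) ->
    forall p, p \is d.-homog -> L * p \in I -> l * p \in I -> z * p \in I -> p \in I.
  move=> l z Hlz p Hp HLp Hlp Hzp.
  apply: (socle_deg d) => //; first by rewrite neq_ltn; apply/orP; left; lia.
  move=> j; apply: (allX HI ai0 HLp).
  by case: Hlz => -[El Ez]; subst l z; apply: Hj2.
have [C1 [u0 [Hu0 Lu0 nu0]]] := core HI HL (HX i1) (HX i2) (Hh d) (Hh d.+1) (Hh d.+2)
   Hv1 Hv2 h32 h1E (nosoc _ _ (or_introl (conj erefl erefl))).
have [C2 _] := core HI HL (HX i2) (HX i1) (Hh d) (Hh d.+1) (Hh d.+2)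
   Hv1 Hv2 h32 h1E (nosoc _ _ (or_intror (conj erefl erefl))).
move/negP: nu0; apply; apply: (socle_deg d.+1) => //.
  by rewrite neq_ltn; apply/orP; left.
move=> j; apply: (allX HI ai0 Lu0); apply: Hj2; [exact: C1|exact: C2].
Qed.
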